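(* Let $\mathcal F$ be a saturated fusion system on a finite $p$-group $S$, and let $Q\trianglelefteq P\le S$ with $P$ fully $\mathcal F$-normalized and $C_S(\xi(Q))\le P$ for all $\xi\in\operatorname{Aut}_\mathcal F(P)$. Then $Q$ is fully $\mathcal F$-centralized.
   Context: Fusion systems: Let $S$ be a finite $p$-group. A fusion system $\mathcal F$ on $S$ is a category whose objects are the subgroups of $S$ and whose morphism sets $\operatorname{Hom}_\mathcal F(P,Q)$ are sets of injective group homomorphisms $P\to Q$, such that (i) every conjugation map $x\mapsto gxg^{-1}$, $g\in S$, from $P$ to $Q$ lies in $\operatorname{Hom}_\mathcal F(P,Q)$, and (ii) every $\varphi\in\operatorname{Hom}_\mathcal F(P,Q)$ factors as an isomorphism $P\to\varphi(P)$ in $\mathcal F$ with inverse in $\mathcal F$ followed by inclusion. $Q$ is fully $\mathcal F$-normalized (resp. centralized) if $|N_S(Q)|$ (resp. $|C_S(Q)|$) is maximal among $\mathcal F$-conjugates of $Q$. For $\varphi\in\operatorname{Hom}_\mathcal F(Q,S)$, $N_\varphi=\{g\in N_S(Q):\varphi c_g|_Q\varphi^{-1}\in\operatorname{Aut}_S(\varphi(Q))\}$, $\operatorname{Aut}_S(\cdot)$ denoting automorphisms induced by conjugation by elements of $S$. $\mathcal F$ is saturated if every fully normalized $Q$ is fully centralized with $\operatorname{Aut}_S(Q)$ a Sylow $p$-subgroup of $\operatorname{Aut}_\mathcal F(Q)$, and every $\varphi\in\operatorname{Hom}_\mathcal F(Q,S)$ with $\varphi(Q)$ fully centralized extends to a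 morphism of $\mathcal F$ defined on $N_\varphi$. *)

(* Defs.v *)
From HB Require Import structures.
From mathcomp Require Import all_boot all_fingroup all_solvable.
Set Implicit Arguments. Unset Strict Implicit. Unset Printing Implicit Defensive.
Import GroupScope.
Local Open Scope group_scope.

Section FusionDefs.
Variable gT : finGroupType.

(* A fusion system on S is given by its hom-sets:
   F P Q f  <=>  f (restricted to P) lies in Hom_F(P,Q).
   Morphisms are represented by finite functions gT -> gT; only their
   values on the source P matter (axiom fs_ext). *)
Definition fhoms := {set gT} -> {set gT} -> {ffun gT -> gT} -> bool.

Definition inj_hom (P Q : {set gT}) (f : {ffun gT -> gT}) : Prop :=
  [/\ {in P &, forall x y, f (x * y) = f x * f y},
      {in P &, injective f} & f @: P \subset Q].

(* conjugation map c_g : x |-> g x g^-1  (MathComp: x ^ y = y^-1 x y) *)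
Definition cmap (g : gT) : {ffun gT -> gT} := [ffun x => x ^ g^-1].

Definition fusion_system (S : {set gT}) (F : fhoms) : Prop :=
  [/\
      (forall P Q f, F P Q f ->
         [/\ group_set P, group_set Q, P \subset S, Q \subset S & inj_hom P Q f]),
      (forall (P Q : {group gT}) (f h : {ffun gT -> gT}), F P Q f -> {in P, f =1 h} -> F P Q h),
      (forall (P Q : {group gT}) g, P \subset S -> Q \subset S -> g \in S ->
         P :^ g^-1 \subset Q -> F P Q (cmap g)),
      (forall P Q R f h, F P Q f -> F Q R h -> F P R [ffun x => h (f x)]) &
      (* (ii) factorization as an F-isomorphism followed by an inclusion *)
      (forall P Q f, F P Q f ->
         F P (f @: P) f /\
         exists h : {ffun gT -> gT}, [/\ F (f @: P) P h, {in P, forall x, h (f x) = x}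
                     & {in f @: P, forall y, f (h y) = y}])].

Definition fully_normalized (S : {set gT}) (F : fhoms) (Q : {set gT}) : Prop :=
  forall f, F Q S f -> #|'N_S(f @: Q)| <= #|'N_S(Q)|.

Definition fully_centralized (S : {set gT}) (F : fhoms) (Q : {set gT}) : Prop :=
  forall f, F Q S f -> #|'C_S(f @: Q)| <= #|'C_S(Q)|.

(* Aut_F(Q), as permutations of gT fixing everything outside Q *)
Definition AutF (F : fhoms) (Q : {set gT}) : {set {perm gT}} :=
  [set a in Aut Q | F Q Q [ffun x => a x]].

Definition AutS (S Q : {set gT}) : {set {perm gT}} :=
  [set a in Aut Q | [exists g in 'N_S(Q), [forall x in Q, a x == x ^ g^-1]]].

Definition Nphi (S Q : {set gT}) (f : {ffun gT -> gT}) : {set gT} :=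
  [set g in 'N_S(Q) | [exists h in 'N_S(f @: Q),
     [forall x in Q, f (x ^ g^-1) == (f x) ^ h^-1]]].

Definition saturated (p : nat) (S : {set gT}) (F : fhoms) : Prop :=
  [/\ fusion_system S F,
      (forall Q : {group gT}, Q \subset S -> fully_normalized S F Q ->
         fully_centralized S F Q /\ p.-Sylow(AutF F Q) (AutS S Q)) &
      (forall (Q : {group gT}) f, F Q S f -> fully_centralized S F (f @: Q) ->
         exists h : {ffun gT -> gT}, F (Nphi S Q f) S h /\ {in Q, h =1 f})].

End FusionDefs.

(* Main.v *)
Require Import Defs.
From mathcomp Require Import all_boot all_fingroup all_solvable.
Set Implicit Arguments. Unset Strict Implicit. Unset Printing Implicit Defensive.
Import GroupScope.

Lemma fs_mor gT (S : {group gT}) (F : fhoms gT) A B f : fusion_system S F -> F A B f ->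
  [/\ group_set A, group_set B, A \subset S, B \subset S & inj_hom A B f].
Proof. by case=> H _ _ _ _; apply: H. Qed.

Lemma fs_ext gT (S : {group gT}) (F : fhoms gT) A B f (h : {ffun gT -> gT}) : fusion_system S F -> F A B f ->
  {in A, f =1 h} -> F A B h.
Proof.
move=> FS Hf Hin; have [gA gB _ _ _] := fs_mor FS Hf.
case: FS => _ E _ _ _; exact: (E (Group gA) (Group gB) f h Hf Hin).
Qed.

Lemma cmap1 (gT : finGroupType) (x : gT) : cmap 1 x = x.
Proof. by rewrite ffunE invg1 conjg1. Qed.

Lemma fs_conj gT (S : {group gT}) (F : fhoms gT) A B g : fusion_system S F ->
  group_set A -> group_set B -> A \subset S -> B \subset S -> g \in S ->
  A :^ g^-1 \subset B -> F A B (cmap g).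
Proof.
move=> FS gA gB sAS sBS Sg sAB; case: FS => _ _ C _ _.
exact: (C (Group gA) (Group gB) g sAS sBS Sg sAB).
Qed.

Lemma fs_incl gT (S : {group gT}) (F : fhoms gT) A B : fusion_system S F ->
  group_set A -> group_set B -> A \subset B -> B \subset S -> F A B (cmap 1).
Proof.
move=> FS gA gB sAB sBS; apply: (fs_conj FS) => //.
  exact: (subset_trans sAB sBS).
by rewrite invg1 conjsg1.
Qed.

Lemma fs_comp gT (S : {group gT}) (F : fhoms gT) A B C f h : fusion_system S F ->
  F A B f -> F B C h -> F A C [ffun x => h (f x)].
Proof. by case=> _ _ _ H _; apply: H. Qed.

Lemma fs_img gT (S : {group gT}) (F : fhoms gT) A B f : fusion_system S F -> F A B f ->
  F A (f @: A) f /\ exists h : {ffun gT -> gT}, [/\ F (f @: A) A h, {in A, forall x, h (f x) = x}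
                     & {in f @: A, forall y, f (h y) = y}].
Proof. by case=> _ _ _ _ H; apply: H. Qed.

Lemma fs_target gT (S : {group gT}) (F : fhoms gT) A B C f : fusion_system S F ->
  F A B f -> group_set C -> B \subset C -> C \subset S -> F A C f.
Proof.
move=> FS Hf gC sBC sCS; have [_ gB _ _ _] := fs_mor FS Hf.
have H := fs_comp FS Hf (fs_incl FS gB gC sBC sCS).
by apply: fs_ext FS H _ => x _; rewrite ffunE cmap1.
Qed.

Lemma fs_source gT (S : {group gT}) (F : fhoms gT) A A' B f : fusion_system S F ->
  F A B f -> group_set A' -> A' \subset A -> F A' B f.
Proof.
move=> FS Hf gA' sA'A; have [gA _ sAS _ _] := fs_mor FS Hf.
have H := fs_comp FS (fs_incl FS gA' gA sA'A sAS) Hf.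
by apply: fs_ext FS H _ => x _; rewrite ffunE cmap1.
Qed.

Definition mkperm (gT : finType) (f : gT -> gT) : {perm gT} :=
  match injectiveP f with ReflectT h => perm h | ReflectF _ => 1%g end.

Lemma mkpermE (gT : finType) (f : gT -> gT) : injective f -> mkperm f =1 f.
Proof. by rewrite /mkperm; case: injectiveP => // h _ x; rewrite permE. Qed.

Definition theta (gT : finGroupType) (R : {set gT}) (phi psi : {ffun gT -> gT}) (g : gT) : {perm gT} :=
  mkperm (fun y => if y \in R then phi ((psi y) ^ g) else y).

Lemma theta_inj gT (S R X: {group gT}) (F : fhoms gT) phi psi g : fusion_system S F ->
  F X R phi -> F R X psi -> {in R, forall y, phi (psi y) = y} -> g \in 'N(X) ->
  injective (fun y => if y \in R then phi ((psi y) ^ g) else y).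
Proof.
move=> FS Fphi Fpsi K2 nXg.
have [_ _ _ _ [_ iphi sphi]] := fs_mor FS Fphi.
have [_ _ _ _ [_ _ spsi]] := fs_mor FS Fpsi.
have psiX y : y \in R -> psi y \in X by move=> Ry; apply: (subsetP spsi); apply: imset_f.
have phiR x : x \in X -> phi x \in R by move=> Xx; apply: (subsetP sphi); apply: imset_f.
move=> y z /=; case: ifP => Ry; case: ifP => Rz.
- move=> E; rewrite -(K2 y Ry) -(K2 z Rz); congr (phi _).
  by apply: (conjg_inj g); apply: iphi E; rewrite memJ_norm // psiX.
- by move=> E; rewrite -E phiR ?memJ_norm ?psiX in Rz.
- by move=> E; rewrite E phiR ?memJ_norm ?psiX in Ry.
- done.
Qed.

Lemma thetaE gT (S R X: {group gT}) (F : fhoms gT) phi psi g : fusion_system S F ->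
  F X R phi -> F R X psi -> {in R, forall y, phi (psi y) = y} -> g \in 'N(X) ->
  forall y, theta R phi psi g y = if y \in R then phi ((psi y) ^ g) else y.
Proof. move=> FS Fphi Fpsi K2 nXg y; rewrite /theta mkpermE //; exact: (theta_inj FS Fphi Fpsi K2 nXg). Qed.

Lemma theta_AutF gT (S R X: {group gT}) (F : fhoms gT) phi psi g : fusion_system S F ->
  F X R phi -> F R X psi -> {in R, forall y, phi (psi y) = y} -> g \in 'N_S(X) ->
  theta R phi psi g \in AutF F R.
Proof.
move=> FS Fphi Fpsi K2; case/setIP=> Sg nXg.
have tE := thetaE FS Fphi Fpsi K2 nXg.
have [_ _ sXS _ [mphi _ sphi]] := fs_mor FS Fphi.
have [_ _ _ _ [mpsi _ spsi]] := fs_mor FS Fpsi.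
have psiX y : y \in R -> psi y \in X by move=> Ry; apply: (subsetP spsi); apply: imset_f.
rewrite inE; apply/andP; split.
  rewrite inE; apply/andP; split.
    by apply/subsetP => y; rewrite inE tE; case: ifP => // _; rewrite eqxx.
  apply/morphicP => y z Ry Rz; rewrite !tE Ry Rz groupM // mpsi // conjMg mphi //.
  by rewrite memJ_norm ?psiX.
  by rewrite memJ_norm ?psiX.
have F1 : F X X (cmap g^-1).
  apply: (fs_conj FS); rewrite ?groupP ?groupV ?invgK ?(normP nXg) //.
have H := fs_comp FS (fs_comp FS Fpsi F1) Fphi.
by apply: fs_ext FS H _ => y Ry; rewrite !ffunE tE Ry invgK.
Qed.

Lemma thetaM gT (S R X: {group gT}) (F : fhoms gT) phi psi : fusion_system S F ->
  F X R phi -> F R X psi -> {in X, forall x, psi (phi x) = x} ->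
  {in R, forall y, phi (psi y) = y} ->
  {in 'N_S(X) &, {morph theta R phi psi : g h / g * h}}.
Proof.
move=> FS Fphi Fpsi K1 K2 g h /setIP[Sg nXg] /setIP[Sh nXh].
have [_ _ sXS _ [mphi _ sphi]] := fs_mor FS Fphi.
have [_ _ _ _ [mpsi _ spsi]] := fs_mor FS Fpsi.
have psiX y : y \in R -> psi y \in X by move=> Ry; apply: (subsetP spsi); apply: imset_f.
have phiR x : x \in X -> phi x \in R by move=> Xx; apply: (subsetP sphi); apply: imset_f.
apply/permP => y; rewrite permM (thetaE FS Fphi Fpsi K2 (groupM nXg nXh)).
rewrite (thetaE FS Fphi Fpsi K2 nXg) (thetaE FS Fphi Fpsi K2 nXh).
case: ifP => Ry; last by rewrite Ry.
have Xy : psi y ^ g \in X by rewrite memJ_norm ?psiX.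
by rewrite phiR // K1 // conjgM.
Qed.

Lemma AutF_group gT (S R : {group gT}) (F : fhoms gT) : fusion_system S F -> R \subset S ->
  group_set (AutF F R).
Proof.
move=> FS sRS; apply/group_setP; split.
  apply/setIdP; split; first exact: group1. apply: fs_ext FS (fs_incl FS (groupP R) (groupP R) (subxx R) sRS) _.
  by move=> x _; rewrite !ffunE ?perm1 ?invg1 ?conjg1.
move=> a b /setIdP[Aa Fa] /setIdP[Ab Fb]; apply/setIdP; split; first exact: groupM.
have H := fs_comp FS Fa Fb.
by apply: fs_ext FS H _ => x _; rewrite !ffunE permM.
Qed.

Lemma AutS_group gT (S R : {group gT}) : group_set (AutS S R).
Proof.
apply/group_setP; split.
  apply/setIdP; split; first exact: group1. apply/exists_inP; exists 1; first by rewrite group1.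
  by apply/forall_inP => x _; rewrite perm1 invg1 conjg1.
move=> a b /setIdP[Aa /exists_inP[g Ng /forall_inP Ha]].
move=> /setIdP[Ab /exists_inP[h Nh /forall_inP Hb]].
apply/setIdP; split; first exact: groupM. apply/exists_inP; exists (h * g); first by rewrite groupM.
apply/forall_inP => x Rx; rewrite permM (eqP (Ha x Rx)) (eqP (Hb _ _)).
  by rewrite invMg conjgM.
by rewrite memJ_norm ?groupV //; case/setIP: Ng.
Qed.

Lemma img_inv gT (S A B : {group gT}) (F : fhoms gT) phi psi : fusion_system S F ->
  F A B phi -> F B A psi -> {in B, forall y, phi (psi y) = y} -> phi @: A = B.
Proof.
move=> FS Fphi Fpsi K2.
have [_ _ _ _ [_ _ sphi]] := fs_mor FS Fphi.
have [_ _ _ _ [_ _ spsi]] := fs_mor FS Fpsi.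
apply/eqP; rewrite eqEsubset sphi /=; apply/subsetP => y By.
by rewrite -(K2 y By) imset_f // (subsetP spsi) // imset_f.
Qed.

Lemma aut_img gT (R : {group gT}) (a : {perm gT}) : a \in Aut R -> a @: R = R.
Proof.
move=> Aa; apply/eqP; rewrite eqEcard card_imset; last exact: perm_inj.
rewrite leqnn andbT; apply/subsetP => y /imsetP[x Rx ->]; exact: Aut_closed.
Qed.

Lemma adjust gT (p : nat) (S R X N : {group gT}) (F : fhoms gT) phi psi :
  p.-group S -> saturated p S F -> R \subset S -> fully_normalized S F R ->
  F X R phi -> F R X psi -> {in X, forall x, psi (phi x) = x} ->
  {in R, forall y, phi (psi y) = y} -> N \subset 'N_S(X) ->
  exists2 a, a \in AutF F R & N \subset Nphi S X [ffun x => a (phi x)].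
Proof.
move=> pS [FS sat2 _] sRS fnR Fphi Fpsi K1 K2 sNN.
have [_ sylA] := sat2 R sRS fnR.
have gAF := AutF_group FS sRS.
pose AF := Group gAF. pose AS := Group (AutS_group S R).
pose th := Morphism (thetaM FS Fphi Fpsi K1 K2).
have sKAF : th @* N \subset AF.
  apply/subsetP => k /morphimP[g Dg Ng ->]; exact: (theta_AutF FS Fphi Fpsi K2 Dg).
have pK : p.-group (th @* N).
  apply: morphim_pgroup; apply: pgroupS pS; exact: (subset_trans sNN (subsetIl _ _)).
have [a AFa sKa] := Sylow_subJ (G:=AF) (P:=AS) sylA sKAF pK.
have AFai : a^-1 \in AF by rewrite groupV.
exists a^-1; first exact: AFai.
have Aai : a^-1 \in Aut R by case/setIdP: AFai.
have imR : [ffun x => a^-1 (phi x)] @: X = R.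
  rewrite -(aut_img Aai) -(img_inv FS Fphi Fpsi K2) -imset_comp.
  by apply: eq_imset => x; rewrite ffunE.
apply/subsetP => g Ng.
have NSg := subsetP sNN g Ng.
have [Sg nXg] := setIP NSg.
have nXgi : g^-1 \in 'N(X) by rewrite groupV.
rewrite inE NSg /=; apply/exists_inP.
have k_in : th g^-1 \in th @* N by apply: mem_morphim; rewrite ?groupV.
have := subsetP sKa _ k_in; rewrite mem_conjg => /setIdP[_ /exists_inP[h Nh /forall_inP Hh]].
exists h; first by rewrite imR.
have [_ _ _ _ [_ _ sphi]] := fs_mor FS Fphi.
apply/forall_inP => x Xx; rewrite !ffunE.
have Rp : phi x \in R by apply: (subsetP sphi); apply: imset_f.
have Ry : a^-1 (phi x) \in R by apply: Aut_closed.
have := Hh _ Ry; rewrite conjgE !permM permK.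
by rewrite /= (thetaE FS Fphi Fpsi K2 nXgi) Rp K1.
Qed.

Lemma exists_fn gT (S X : {group gT}) (F : fhoms gT) : fusion_system S F -> X \subset S ->
  exists f0, F X S f0 /\ fully_normalized S F (f0 @: X).
Proof.
move=> FS sXS.
have Fi0 : F X S (cmap 1) := fs_incl FS (groupP X) (groupP S) sXS (subxx S).
case: (arg_maxnP (fun f : {ffun gT -> gT} => #|'N_S(f @: X)|) Fi0) => f0 Ff0 Hmax.
exists f0; split => // g Fg.
have [Fimg _] := fs_img FS Ff0.
have H := Hmax _ (fs_comp FS Fimg Fg).
have E : [ffun x => g (f0 x)] @: X = g @: (f0 @: X).
  by rewrite -imset_comp; apply: eq_imset => x; rewrite ffunE.
by rewrite -E.
Qed.

Unset Implicit Arguments.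
Set Strict Implicit.

Theorem lemma2p5 (gT : finGroupType) (p : nat) (S P Q : {group gT})
  (F : fhoms gT) :
  prime p -> p.-group S -> saturated p S F ->
  P \subset S -> Q <| P -> fully_normalized S F P ->
  (forall xi, F P P xi -> 'C_S(xi @: Q) \subset P) ->
  fully_centralized S F Q.
Proof.
move=> pr_p pS satF sPS nQP fnP hypC.
have [FS sat2 sat3] := satF.
case/andP: nQP => sQP nPQ.
have sQS := subset_trans sQP sPS.
have [f0 [Ff0 fnR]] := exists_fn FS sQS.
have [Ff0R [psi0 [Fpsi0 K01 K02]]] := fs_img FS Ff0.
have [_ gR _ sRS _] := fs_mor FS Ff0R.
pose R := Group gR.
have [fcR _] := sat2 R sRS fnR.
move=> f Ff.
suff leRQ : #|'C_S(R)| <= #|'C_S(Q)|.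
  apply: leq_trans leRQ.
  have Fg := fs_comp FS Fpsi0 Ff.
  have := fcR _ Fg.
  have imQ : psi0 @: R = Q := @img_inv gT S R Q F psi0 f0 FS Fpsi0 Ff0R K01.
  have E : [ffun x => f (psi0 x)] @: R = f @: (psi0 @: R).
    by rewrite -[in RHS]imset_comp; apply: eq_imset => x; rewrite ffunE.
  by rewrite E imQ.
have nQ : P \subset 'N_S(Q) by rewrite subsetI sPS nPQ.
have [a AFa sPN] := @adjust gT p S R Q P F f0 psi0 pS satF sRS fnR Ff0R Fpsi0 K01 K02 nQ.
have [Aa Fa] := setIdP AFa.
pose phi := [ffun x => a (f0 x)].
have Fphi : F Q R phi.
  have H := fs_comp FS Ff0R Fa.
  by apply: fs_ext FS H _ => x _; rewrite !ffunE.
have imR : phi @: Q = R.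
  rewrite -[RHS](aut_img Aa) -[in RHS]imset_comp.
  by apply: eq_imset => x; rewrite !ffunE.
have FphiS : F Q S phi := fs_target FS Fphi (groupP S) sRS (subxx S).
have fcphi : fully_centralized S F (phi @: Q) by rewrite imR.
have [chi1 [Fchi1 Echi1]] := sat3 Q phi FphiS fcphi.
have FchiP : F P S chi1 := fs_source FS Fchi1 (groupP P) sPN.
have [Fc1 [psi [Fpsi K1 K2]]] := fs_img FS FchiP.
have [_ gP' _ sP'S [mchi1 ichi1 _]] := fs_mor FS Fc1.
pose P' := Group gP'.
have [_ _ _ _ [mpsi ipsi spsi]] := fs_mor FS Fpsi.
have imQR : chi1 @: Q = R by rewrite -imR; apply: eq_in_imset.
have sRP' : R \subset P' by rewrite -imQR; apply: imsetS.
have [fcP _] := sat2 P sPS fnP.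
have Fpsi' : F P' P psi := Fpsi.
have Fc1' : F P P' chi1 := Fc1.
have [b AFb sNb] := @adjust gT p S P P' ('N_S(P'))%G F psi chi1 pS satF sPS fnP Fpsi' Fc1' K2 K1 (subxx _).
have [Ab Fb] := setIdP AFb.
pose psi' := [ffun x => b (psi x)].
have Fpsi'' : F P' P psi'.
  have H := fs_comp FS Fpsi' Fb.
  by apply: fs_ext FS H _ => x _; rewrite !ffunE.
have imP : psi' @: P' = P.
  rewrite -[RHS](aut_img Ab) -(@img_inv gT S P' P F psi chi1 FS Fpsi' Fc1' K1) -[in RHS]imset_comp.
  by apply: eq_imset => x; rewrite !ffunE.
have FpsiS : F P' S psi' := fs_target FS Fpsi'' (groupP S) sPS (subxx S).
have fcpsi : fully_centralized S F (psi' @: P') by rewrite imP.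
have [chi [Fchi Echi]] := sat3 P' psi' FpsiS fcpsi.
have [_ _ _ _ [mchi ichi schi]] := fs_mor FS Fchi.
have sP'S' : P' \subset S := sP'S.
have sP'D : P' \subset Nphi S P' psi'.
  by apply: subset_trans _ sNb; rewrite subsetI normG sP'S'.
have nRP' : P' \subset 'N(R).
  pose m1 := Morphism mchi1.
  have cJ : {in P &, forall u v, chi1 (u ^ v) = chi1 u ^ chi1 v} := morphJ m1.
  apply/subsetP => _ /imsetP[x Px ->]; rewrite inE.
  apply/subsetP => z; rewrite mem_conjg -imQR => /imsetP[q Qq Ez].
  have Pq := subsetP sQP q Qq; rewrite -(conjgKV (chi1 x) z) Ez -cJ //.
  by apply: imset_f; rewrite memJ_norm // (subsetP nPQ).
have nCP' : P' \subset 'N('C_S(R)) := normsI (subset_trans sP'S' (normG S)) (norms_cent nRP').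
have sCP' : 'C_S(R) \subset P'.
  apply/idPn => nsub.
  pose T := ('C_S(R) <*> P')%G.
  have sTS : T \subset S by rewrite join_subG subsetIl sP'S'.
  have prP'T : P' \proper T.
    rewrite properEneq joing_subr andbT; apply/eqP => E; by move: nsub; rewrite E joing_subl.
  have [_ [u NTu nP'u]] := properP (nilpotent_proper_norm (pgroup_nil (pgroupS sTS pS)) prP'T).
  have [Tu nu] := setIP NTu.
  move: Tu; rewrite /T /= (norm_joinEr nCP') => /mulsgP[c y Cc P'y Eu].
  have [Sc cRc] := setIP Cc.
  have nc : c \in 'N(P').
    have -> : c = u * y^-1 by rewrite Eu mulgK.
    by rewrite groupM // groupV; apply: (subsetP (normG P')).
  have nP'c : c \notin P' by apply: contra nP'u => P'c; rewrite Eu groupM.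
  have Dc : c \in Nphi S P' psi' by apply: (subsetP sNb); apply/setIP; split.
  have Cchic : chi c \in 'C_S([ffun x => b x] @: Q).
    apply/setIP; split; first by apply: (subsetP schi); apply: imset_f.
    apply/centP => _ /imsetP[q Qq ->].
    have Pq := subsetP sQP q Qq.
    have Rr : chi1 q \in R by rewrite -imQR imset_f.
    have P'r := subsetP sRP' _ Rr.
    have -> : [ffun x => b x] q = chi (chi1 q) by rewrite ffunE Echi // ffunE K1.
    have Dr := subsetP sP'D _ P'r.
    by rewrite /commute -(mchi c (chi1 q) Dc Dr) -(mchi (chi1 q) c Dr Dc) (centP cRc _ Rr).
  have := subsetP (hypC _ Fb) _ Cchic.
  rewrite -{1}imP => /imsetP[y' P'y' E'].
  have E2 : chi c = chi y' by rewrite E' Echi.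
  by move: nP'c; rewrite (ichi c y' Dc (subsetP sP'D _ P'y') E2) P'y'.
have injC : {in 'C_S(R) &, injective psi}.
  by move=> x y Hx Hy; apply: ipsi; apply: (subsetP sCP').
rewrite -(card_in_imset injC); apply: subset_leq_card; apply/subsetP => _ /imsetP[c Cc ->].
have [Sc cRc] := setIP Cc.
have P'c := subsetP sCP' c Cc.
apply/setIP; split.
  by apply: (subsetP sPS); apply: (subsetP spsi); apply: imset_f.
apply/centP => q Qq.
have Pq := subsetP sQP q Qq.
have Rr : chi1 q \in R by rewrite -imQR imset_f.
have P'r := subsetP sRP' _ Rr.
rewrite -(K1 q Pq) /commute -!mpsi //.
by rewrite (centP cRc _ Rr).
Qed.
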